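(* Let $S,T\subseteq\{1,\dots,n-1\}$ be nonempty. Let $U_{S,T}=\{s_j-s_i>0 : s_i,s_j\in S\}\cup\{t_j-t_i>0: t_i,t_j\in T\}\cup\{s+t : s\in S, t\in T\}$. Then $\gcd(U_{S,T})=\gcd\{s+t: s\in S, t\in T\}$. *)

(* Defs.v *)
From mathcomp Require Import all_boot.
Set Implicit Arguments.
Unset Strict Implicit.

(* Subsets of {1,...,n-1} are represented as S : {set 'I_n} with 0 \notin S.
   The gcd of a finite set X of naturals is \big[gcdn/0] over its elements
   (listing an element several times does not change the gcd). *)

Definition gcd_diffs (n : nat) (S : {set 'I_n}) : nat :=
  \big[gcdn/0]_(i in S) \big[gcdn/0]_(j in S | i < j) (j - i).

Definition gcd_sums (n : nat) (S T : {set 'I_n}) : nat :=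
  \big[gcdn/0]_(s in S) \big[gcdn/0]_(t in T) (s + t).

Definition gcd_U (n : nat) (S T : {set 'I_n}) : nat :=
  gcdn (gcdn (gcd_diffs S) (gcd_diffs T)) (gcd_sums S T).

(* Main.v *)
Require Import Defs.
From mathcomp Require Import all_boot.

Theorem proposition2p2 (n : nat) (S T : {set 'I_n}) :
  S != set0 -> T != set0 ->
  (forall s : 'I_n, s \in S -> 0 < s) ->
  (forall t : 'I_n, t \in T -> 0 < t) ->
  gcd_U S T = gcd_sums S T.
Proof.
move=> /set0Pn [s0 Hs0] /set0Pn [t0 Ht0] _ _.
set g := gcd_sums S T.
have Hg : forall s t, s \in S -> t \in T -> g %| s + t.
  move=> s t Hs Ht.
  by apply: (biggcdn_inf s) => //; apply: (biggcdn_inf t).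
rewrite /gcd_U gcdnC; apply/gcdn_idPl; rewrite dvdn_gcd; apply/andP; split.
  apply/dvdn_biggcdP => i Hi; apply/dvdn_biggcdP => j /andP [Hj _].
  by rewrite -(subnDr t0); apply: dvdn_sub; apply: Hg.
apply/dvdn_biggcdP => i Hi; apply/dvdn_biggcdP => j /andP [Hj _].
by rewrite -(subnDl s0); apply: dvdn_sub; apply: Hg.
Qed.
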